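(* Let $G$ be a group, $N$ a normal subgroup of $G$, and $S=\bigoplus_{g\in G}S_g$ a virtually epsilon-strongly $G$-graded ring where, for each $g\in G$, $M_g$ is a set of commuting orthogonal idempotents such that $E_g=\bigvee M_g$ is a set of local units for $S_gS_{g^{-1}}$. For each $C\in G/N$ put $A_C=\bigvee_{g\in C}M_g$ and assume: (a) for all $g,h\in C$ and $e\in M_g$, $f\in M_h$ we have $ef=fe$; (b) the maximal elements of $(A_C,\le)$ are pairwise orthogonal idempotents; (c) every chain in the poset $(A_C,\le)$ is finite. Then the induced $G/N$-grading $\{S_C\}_{C\in G/N}$ is virtually epsilon-strong.
   Context: Rings are associative, not necessarily unital; $AB$ denotes finite sums of products. A $G$-grading: $S=\bigoplus_gS_g$, $S_gS_h\subseteq S_{gh}$. Induced grading: $S_C=\bigoplus_{g\in C}S_g$. Idempotents are ordered by $a\le b$ iff $a=ab=ba$; $\vee$ is the least upper bound (for commuting idempotents $a\vee b=a+b-ab$); for a family $\{M_i\}$, $\bigvee_iM_i$ is the set of finite joins of elements of $\bigcup_iM_i$. A set of local units for a ring $R$ is a $\vee$-closed set of pairwise commuting idempotents of $R$ such that every $r\in R$ has some $f$ in it with $fr=rf=r$. A grading $\{T_h\}_{h\in H}$ is virtually epsilon-strong if $T_hT_{h^{-1}}T_h=T_h$ for all $h$ and each ring $T_hT_{h^{-1}}$ has enough idempotents: a set of pairwise orthogonal commuting idempotents of that ring whose $\vee$-closure is a set of local units for it. *)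

(* Defs.v *)
From HB Require Import structures.
From mathcomp Require Import all_boot all_algebra.
From Stdlib Require List.
Set Implicit Arguments. Unset Strict Implicit. Unset Printing Implicit Defensive.
Import GRing.Theory.
Local Open Scope ring_scope.

Record Grp := {
  gcar :> Type;
  gmul : gcar -> gcar -> gcar;
  ginv : gcar -> gcar;
  gone : gcar;
  gmulA : forall x y z, gmul x (gmul y z) = gmul (gmul x y) z;
  gmul1 : forall x, gmul gone x = x /\ gmul x gone = x;
  gmulV : forall x, gmul (ginv x) x = gone /\ gmul x (ginv x) = gone
}.

Definition normal_subgroup (G : Grp) (N : G -> Prop) : Prop :=
  N (gone G) /\
  (forall x y, N x -> N y -> N (gmul x y)) /\
  (forall x, N x -> N (ginv x)) /\
  (forall g x, N x -> N (gmul (gmul (ginv g) x) g)).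

Definition coset (G : Grp) (N : G -> Prop) (g : G) : G -> Prop :=
  fun h => N (gmul (ginv g) h).

(** * Associative, not necessarily unital rings: an additive group S with a
      biadditive associative multiplication *)
Definition is_rng (S : zmodType) (mul : S -> S -> S) : Prop :=
  (forall x y z, mul x (mul y z) = mul (mul x y) z) /\
  (forall x y z, mul (x + y) z = mul x z + mul y z) /\
  (forall x y z, mul x (y + z) = mul x y + mul x z).

Section RingNotions.
Variables (S : zmodType) (mul : S -> S -> S).

Definition seteq (A B : S -> Prop) : Prop := forall x, A x <-> B x.

Definition prodset (A B : S -> Prop) : S -> Prop :=
  fun x => exists l : seq (S * S),
    (forall p, List.In p l -> A p.1 /\ B p.2) /\
    x = \sum_(p <- l) mul p.1 p.2.

Definition idem (e : S) : Prop := mul e e = e.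

Definition idle (a b : S) : Prop := a = mul a b /\ a = mul b a.

(** join of two commuting idempotents (their least upper bound) *)
Definition ijoin (a b : S) : S := a + b - mul a b.

Definition vee (M : S -> Prop) : S -> Prop :=
  fun x => exists (e : S) (s : seq S),
    M e /\ (forall y, List.In y s -> M y) /\ x = foldr ijoin e s.

Definition local_units (R E : S -> Prop) : Prop :=
  (forall e, E e -> R e /\ idem e) /\
  (forall e f, E e -> E f -> mul e f = mul f e) /\
  (forall e f, E e -> E f -> E (ijoin e f)) /\
  (forall r, R r -> exists f, E f /\ mul f r = r /\ mul r f = r).

Definition enough_idem_set (R M : S -> Prop) : Prop :=
  (forall e, M e -> R e /\ idem e) /\
  (forall e f, M e -> M f -> mul e f = mul f e) /\
  (forall e f, M e -> M f -> e <> f -> mul e f = 0 /\ mul f e = 0) /\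
  local_units R (vee M).

Definition has_enough_idem (R : S -> Prop) : Prop :=
  exists M, enough_idem_set R M.

Definition veps_component (Th Thinv : S -> Prop) : Prop :=
  seteq (prodset (prodset Th Thinv) Th) Th /\ has_enough_idem (prodset Th Thinv).

End RingNotions.

Definition is_grading (G : Grp) (S : zmodType) (mul : S -> S -> S)
    (Sg : G -> S -> Prop) : Prop :=
  (forall g, Sg g 0) /\
  (forall g x y, Sg g x -> Sg g y -> Sg g (x - y)) /\
  (forall g h x y, Sg g x -> Sg h y -> Sg (gmul g h) (mul x y)) /\
  (forall s, exists l : seq (G * S),
      (forall p, List.In p l -> Sg p.1 p.2) /\ s = \sum_(p <- l) p.2) /\
  (forall l : seq (G * S), List.NoDup (map fst l) ->
      (forall p, List.In p l -> Sg p.1 p.2) -> \sum_(p <- l) p.2 = 0 ->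
      forall p, List.In p l -> p.2 = 0).

Definition induced_comp (G : Grp) (N : G -> Prop) (S : zmodType)
    (Sg : G -> S -> Prop) (g : G) : S -> Prop :=
  fun x => exists l : seq (G * S),
    (forall p, List.In p l -> coset N g p.1 /\ Sg p.1 p.2) /\
    x = \sum_(p <- l) p.2.

Definition A_C (G : Grp) (N : G -> Prop) (S : zmodType) (mul : S -> S -> S)
    (M : G -> S -> Prop) (g : G) : S -> Prop :=
  vee mul (fun e => exists h, coset N g h /\ M h e).

Definition maximal_in (S : zmodType) (mul : S -> S -> S) (A : S -> Prop) (e : S) :=
  A e /\ forall f, A f -> idle mul e f -> f = e.

Definition is_chain (S : zmodType) (mul : S -> S -> S) (A Ch : S -> Prop) :=
  (forall x, Ch x -> A x) /\
  (forall x y, Ch x -> Ch y -> idle mul x y \/ idle mul y x).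

Definition finite_set (S : Type) (X : S -> Prop) :=
  exists l : seq S, forall x, X x -> List.In x l.

(* Main.v *)
Require Import Defs.
From mathcomp Require Import all_boot all_algebra.
From Stdlib Require Import Classical ClassicalEpsilon.
From Stdlib Require List.
Set Implicit Arguments. Unset Strict Implicit. Unset Printing Implicit Defensive.
Import GRing.Theory.
Local Open Scope ring_scope.

Section Rng.
Variables (S : zmodType) (mul : S -> S -> S).
Hypothesis Hr : is_rng mul.

Lemma mA x y z : mul x (mul y z) = mul (mul x y) z. Proof. by case: Hr. Qed.
Lemma mDl x y z : mul (x + y) z = mul x z + mul y z. Proof. by case: Hr => _ []. Qed.
Lemma mDr x y z : mul x (y + z) = mul x y + mul x z. Proof. by case: Hr => _ []. Qed.
Lemma m0l x : mul 0 x = 0.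
Proof. apply: (addrI (mul 0 x)); by rewrite -mDl !addr0. Qed.
Lemma m0r x : mul x 0 = 0.
Proof. apply: (addrI (mul x 0)); by rewrite -mDr !addr0. Qed.
Lemma mNl x y : mul (- x) y = - mul x y.
Proof. apply: (addrI (mul x y)); by rewrite -mDl !subrr m0l. Qed.
Lemma mNr x y : mul x (- y) = - mul x y.
Proof. apply: (addrI (mul x y)); by rewrite -mDr !subrr m0r. Qed.
Lemma mBl x y z : mul (x - y) z = mul x z - mul y z.
Proof. by rewrite mDl mNl. Qed.
Lemma mBr x y z : mul x (y - z) = mul x y - mul x z.
Proof. by rewrite mDr mNr. Qed.

Lemma msuml (T : Type) (l : seq T) (F : T -> S) w :
  mul (\sum_(p <- l) F p) w = \sum_(p <- l) mul (F p) w.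
Proof. elim: l => [|a l IH]; first by rewrite !big_nil m0l. by rewrite !big_cons mDl IH. Qed.
Lemma msumr (T : Type) (l : seq T) (F : T -> S) w :
  mul w (\sum_(p <- l) F p) = \sum_(p <- l) mul w (F p).
Proof. elim: l => [|a l IH]; first by rewrite !big_nil m0r. by rewrite !big_cons mDr IH. Qed.

Lemma sum_closed (P : S -> Prop) (T : Type) (l : seq T) (F : T -> S) :
  P 0 -> (forall x y, P x -> P y -> P (x + y)) ->
  (forall p, List.In p l -> P (F p)) -> P (\sum_(p <- l) F p).
Proof.
move=> P0 PD; elim: l => [|a l IH] H; first by rewrite big_nil.
rewrite big_cons; apply: PD; first by apply: H; left.
apply: IH => p Hp; apply: H; by right.
Qed.

Lemma ps0 A B : prodset mul A B 0.
Proof. by exists [::]; split => //; rewrite big_nil. Qed.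
Lemma psD A B x y : prodset mul A B x -> prodset mul A B y -> prodset mul A B (x + y).
Proof.
move=> [l1 [H1 ->]] [l2 [H2 ->]]; exists (l1 ++ l2); split; last by rewrite big_cat.
move=> p /(@List.in_app_or _ _ _ _) [] ?; [exact: H1|exact: H2].
Qed.
Lemma psN A B x : (forall a, A a -> A (- a)) -> prodset mul A B x -> prodset mul A B (- x).
Proof.
move=> HA [l [H ->]]; exists [seq (- p.1, p.2) | p <- l]; split.
- move=> p /(List.in_map_iff _ _ _) [q [<- Hq]] /=; have [? ?] := H q Hq; split => //; exact: HA.
- rewrite big_map -sumrN; apply: eq_bigr => p _ /=; by rewrite mNl.
Qed.
Lemma ps1 (A B : S -> Prop) a b : A a -> B b -> prodset mul A B (mul a b).
Proof.
move=> Ha Hb; exists [:: (a, b)]; split; last by rewrite big_cons big_nil addr0.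
by move=> p [<-|[]].
Qed.
Lemma psmono (A B A' B' : S -> Prop) x : (forall a, A a -> A' a) -> (forall b, B b -> B' b) ->
  prodset mul A B x -> prodset mul A' B' x.
Proof.
move=> HA HB [l [H ->]]; exists l; split => // p /H [? ?]; split; auto.
Qed.

Lemma ijoinA a b c : ijoin mul (ijoin mul a b) c = ijoin mul a (ijoin mul b c).
Proof.
rewrite /ijoin mBl mDl mBr mDr mA.
rewrite !opprD !opprK !addrA; congr (_ + _).
rewrite (addrAC _ (- mul a c)); congr (_ + _).
by rewrite (addrAC _ (- mul a b) c) (addrAC _ (- mul a b)).
Qed.

Lemma comm_join a b c : mul c a = mul a c -> mul c b = mul b c ->
  mul c (ijoin mul a b) = mul (ijoin mul a b) c.
Proof.
move=> ha hb.
have e : mul c (mul a b) = mul (mul a b) c by rewrite mA ha -mA hb mA.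
by rewrite /ijoin mBr mDr mBl mDl ha hb e.
Qed.

Lemma idem_join a b : idem mul a -> idem mul b -> mul a b = mul b a ->
  idem mul (ijoin mul a b).
Proof.
rewrite /idem => ha hb hab.
set x := ijoin mul a b.
have e1 : mul (mul a b) a = mul a b by rewrite -mA -hab mA ha.
have e2 : mul (mul a b) b = mul a b by rewrite -mA hb.
have xa : mul x a = a by rewrite /x /ijoin mBl mDl ha -hab e1 addrK.
have xb : mul x b = b by rewrite /x /ijoin mBl mDl hb e2 addrAC subrr add0r.
by rewrite {2}/x /ijoin mBr mDr xa xb mA xa.
Qed.

Lemma lu1 e f r : mul e r = r -> mul e f = mul f e -> mul (ijoin mul e f) r = r.
Proof. move=> her hef; by rewrite /ijoin mBl mDl hef -mA her addrK. Qed.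
Lemma lu2 e f r : mul f r = r -> mul (ijoin mul e f) r = r.
Proof. move=> hfr; by rewrite /ijoin mBl mDl -mA hfr addrAC subrr add0r. Qed.
Lemma ru1 e f r : mul r e = r -> mul r (ijoin mul e f) = r.
Proof. move=> her; by rewrite /ijoin mBr mDr mA her addrK. Qed.
Lemma ru2 e f r : mul r f = r -> mul e f = mul f e -> mul r (ijoin mul e f) = r.
Proof. move=> hrf hef; by rewrite /ijoin mBr mDr hef mA hrf addrAC subrr add0r. Qed.

Lemma foldr_join_assoc e s y :
  ijoin mul (foldr (ijoin mul) e s) y = foldr (ijoin mul) (ijoin mul e y) s.
Proof. elim: s => //= z s IH; by rewrite ijoinA IH. Qed.

Lemma vee_join P x y : vee mul P x -> vee mul P y -> vee mul P (ijoin mul x y).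
Proof.
move=> [e [s [He [Hs ->]]]] [e' [s' [He' [Hs' ->]]]].
exists e', (s ++ e :: s'); split => //; split.
  move=> z /(@List.in_app_or _ _ _ _) [/Hs|[<-|/Hs']] //.
by rewrite foldr_cat foldr_join_assoc.
Qed.

Lemma vee_ind (P Q : S -> Prop) : (forall x, P x -> Q x) ->
  (forall x y, Q x -> Q y -> Q (ijoin mul x y)) -> forall x, vee mul P x -> Q x.
Proof.
move=> H1 H2 x [e [s [He [Hs ->]]]]; elim: s Hs => /= [|z s IH] Hs; first exact: H1.
apply: H2; first by apply: H1; apply: Hs; left.
apply: IH => y Hy; apply: Hs; by right.
Qed.

Lemma vee_gen (P : S -> Prop) x : P x -> vee mul P x.
Proof. by move=> Hx; exists x, [::]. Qed.

Lemma vee_mono (P Q : S -> Prop) x : (forall y, P y -> Q y) -> vee mul P x -> vee mul Q x.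
Proof.
move=> H; apply: vee_ind => [y Hy|]; first by apply: vee_gen; auto.
exact: vee_join.
Qed.

Lemma idle_trans a b c : idle mul a b -> idle mul b c -> idle mul a c.
Proof.
move=> [h1 h2] [h3 h4]; split.
  by rewrite {1}h1 {1}h3 mA -h1.
by rewrite {1}h2 {1}h4 -mA -h2.
Qed.
Lemma idle_antisym a b : idle mul a b -> idle mul b a -> a = b.
Proof. move=> [h1 _] [_ h4]; by rewrite {1}h1 -h4. Qed.
Lemma idle_refl a : idem mul a -> idle mul a a.
Proof. by rewrite /idem /idle => ->. Qed.
End Rng.

Lemma In_mem (T : eqType) (x : T) l : List.In x l -> x \in l.
Proof. elim: l => //= y l IH [->|/IH]; rewrite in_cons ?eqxx // => ->; by rewrite orbT. Qed.

Section Grp.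
Variable G : Grp.
Lemma gA (x y z : G) : gmul x (gmul y z) = gmul (gmul x y) z. Proof. exact: gmulA. Qed.
Lemma g1l (x : G) : gmul (gone G) x = x. Proof. exact: (gmul1 x).1. Qed.
Lemma g1r (x : G) : gmul x (gone G) = x. Proof. exact: (gmul1 x).2. Qed.
Lemma gVl (x : G) : gmul (ginv x) x = gone G. Proof. exact: (gmulV x).1. Qed.
Lemma gVr (x : G) : gmul x (ginv x) = gone G. Proof. exact: (gmulV x).2. Qed.
Lemma mulKg (x y : G) : gmul (ginv x) (gmul x y) = y. Proof. by rewrite gA gVl g1l. Qed.
Lemma mulVKg (x y : G) : gmul x (gmul (ginv x) y) = y. Proof. by rewrite gA gVr g1l. Qed.
Lemma ginvK (x : G) : ginv (ginv x) = x.
Proof. have := mulKg (ginv x) x; by rewrite gVl g1r. Qed.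
Lemma ginvM (x y : G) : ginv (gmul x y) = gmul (ginv y) (ginv x).
Proof.
have E : gmul (gmul x y) (gmul (ginv y) (ginv x)) = gone G by rewrite -gA mulVKg gVr.
by rewrite -[RHS](mulKg (gmul x y)) E g1r.
Qed.

Variable N : G -> Prop.
Hypothesis HN : normal_subgroup N.
Lemma N1 : N (gone G). Proof. by case: HN. Qed.
Lemma NM x y : N x -> N y -> N (gmul x y). Proof. by move: HN => [_ [H _]]; apply: H. Qed.
Lemma NV x : N x -> N (ginv x). Proof. by move: HN => [_ [_ [H _]]]; apply: H. Qed.
Lemma NJ c x : N x -> N (gmul (gmul (ginv c) x) c). Proof. by move: HN => [_ [_ [_ H]]]; apply: H. Qed.

Lemma c1 g : coset N g g. Proof. rewrite /coset gVl; exact: N1. Qed.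
Lemma c2 g h : coset N g h -> coset N (ginv g) (ginv h).
Proof.
rewrite /coset ginvK => /NV; rewrite ginvM ginvK => /(NJ (ginv g)).
by rewrite ginvK -!gA gVr g1r.
Qed.
Lemma c3 g k : coset N (ginv g) k -> coset N g (ginv k).
Proof.
rewrite /coset ginvK => /NV; rewrite ginvM => /(NJ g).
by rewrite -!gA gVl g1r.
Qed.
Lemma c4 g h k l : coset N g h -> coset N (ginv g) k -> coset N g l ->
  coset N g (gmul (gmul h k) l).
Proof.
rewrite /coset ginvK => Ha Hb Hc.
have -> : gmul (ginv g) (gmul (gmul h k) l) =
  gmul (gmul (ginv g) h) (gmul (gmul (gmul (ginv g) (gmul g k)) g) (gmul (ginv g) l)).
  by rewrite -!gA !mulKg !mulVKg.
apply: NM => //; apply: NM => //; exact: NJ.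
Qed.
End Grp.


Section Main.
Variables (G : Grp) (N : G -> Prop) (S : zmodType)
    (mul : S -> S -> S) (Sg : G -> S -> Prop) (M : G -> S -> Prop).
Hypotheses (Hr : is_rng mul) (HN : normal_subgroup N) (HG : is_grading mul Sg)
  (H4 : forall g, seteq (prodset mul (prodset mul (Sg g) (Sg (ginv g))) (Sg g)) (Sg g))
  (H5 : forall g, enough_idem_set mul (prodset mul (Sg g) (Sg (ginv g))) (M g))
  (Ha : forall g h k e f, coset N g h -> coset N g k -> M h e -> M k f ->
     mul e f = mul f e)
  (Hb1 : forall g e, maximal_in mul (A_C N mul M g) e -> idem mul e)
  (Hb2 : forall g e f, maximal_in mul (A_C N mul M g) e ->
     maximal_in mul (A_C N mul M g) f -> e <> f ->
     mul e f = 0 /\ mul f e = 0)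
  (Hc : forall g Ch, is_chain mul (A_C N mul M g) Ch -> finite_set Ch).

Local Notation IC := (induced_comp N Sg).

Lemma Sg0 h : Sg h 0. Proof. by case: HG. Qed.
Lemma SgB h x y : Sg h x -> Sg h y -> Sg h (x - y).
Proof. by move: HG => [_ [H _]]; apply: H. Qed.
Lemma SgN h x : Sg h x -> Sg h (- x).
Proof. by move=> Hx; rewrite -sub0r; apply: SgB => //; apply: Sg0. Qed.
Lemma SgM h k x y : Sg h x -> Sg k y -> Sg (gmul h k) (mul x y).
Proof. by move: HG => [_ [_ [H _]]]; apply: H. Qed.

Lemma IC0 x : IC x 0.
Proof. by exists [::]; split => //; rewrite big_nil. Qed.
Lemma ICD x a b : IC x a -> IC x b -> IC x (a + b).
Proof.
move=> [l1 [H1 ->]] [l2 [H2 ->]]; exists (l1 ++ l2); split; last by rewrite big_cat.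
move=> p /(@List.in_app_or _ _ _ _) [] ?; [exact: H1|exact: H2].
Qed.
Lemma ICN x a : IC x a -> IC x (- a).
Proof.
move=> [l [H ->]]; exists [seq (p.1, - p.2) | p <- l]; split.
- move=> p /(List.in_map_iff _ _ _) [q [<- Hq]] /=; have [? ?] := H q Hq; split => //; exact: SgN.
- by rewrite big_map -sumrN.
Qed.
Lemma ICsg x h a : coset N x h -> Sg h a -> IC x a.
Proof.
move=> Hc' Ha'; exists [:: (h, a)]; split; last by rewrite big_cons big_nil addr0.
by move=> p [<-|[]].
Qed.

Variable g : G.

Lemma ICtriple a b c : IC g a -> IC (ginv g) b -> IC g c -> IC g (mul (mul a b) c).
Proof.
move=> [la [Hla ->]] [lb [Hlb ->]] [lc [Hlc ->]].
rewrite !(msuml Hr); apply: sum_closed (IC0 _) (@ICD _) _ => pa /Hla [ca sa].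
rewrite [mul pa.2 _](msumr Hr) (msuml Hr); apply: sum_closed (IC0 _) (@ICD _) _ => pb /Hlb [cb sb].
rewrite (msumr Hr); apply: sum_closed (IC0 _) (@ICD _) _ => pc /Hlc [cc sc].
apply: (ICsg (c4 HN ca cb cc)); apply: SgM => //; exact: SgM.
Qed.

Local Notation R := (prodset mul (IC g) (IC (ginv g))).

Lemma Rmul x y : R x -> R y -> R (mul x y).
Proof.
move=> [l [Hl ->]] Hy; rewrite (msuml Hr).
apply: sum_closed (ps0 _ _ _) (@psD _ _ _ _) _ => p /Hl [h1 h2].
case: Hy => [l' [Hl' ->]]; rewrite (msumr Hr).
apply: sum_closed (ps0 _ _ _) (@psD _ _ _ _) _ => q /Hl' [k1 k2].
rewrite (mA Hr); apply: ps1 => //; exact: ICtriple.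
Qed.

Lemma Rjoin x y : R x -> R y -> R (ijoin mul x y).
Proof.
move=> Hx Hy; rewrite /ijoin; apply: psD; first exact: psD.
apply: (psN Hr); [exact: ICN | exact: Rmul].
Qed.

Local Notation Gen := (fun e => exists h, coset N g h /\ M h e).
Local Notation A := (A_C N mul M g).

Lemma Gen_R e : Gen e -> R e /\ idem mul e.
Proof.
move=> [h [ch He]]; have [/psmono H1 H2] := (H5 h).1 e He; split => //.
apply: H1 => a; [exact: ICsg | exact: ICsg (c2 HN ch)].
Qed.

Lemma A_comm_gen x e : A x -> Gen e -> mul e x = mul x e.
Proof.
move=> Ax [h [ch He]]; move: x Ax; apply: vee_ind.
  move=> y [k [ck Hy]]; exact: Ha ch ck He Hy.
by move=> y z; apply: (comm_join Hr).
Qed.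

Lemma A_comm x y : A x -> A y -> mul x y = mul y x.
Proof.
move=> Ax Ay; move: y Ay; apply: (vee_ind (Q := fun y => mul x y = mul y x)) => [z Gz|].
  by rewrite (A_comm_gen Ax Gz).
by move=> y z /= h1 h2; apply: (comm_join Hr).
Qed.

Lemma A_join x y : A x -> A y -> A (ijoin mul x y).
Proof. exact: (vee_join Hr). Qed.

Lemma A_idem x : A x -> idem mul x.
Proof.
have : forall x, A x -> A x /\ idem mul x; last by move=> H /H [].
apply: vee_ind => [z Gz|]; first by split; [apply: vee_gen | case: (Gen_R Gz)].
move=> y z [Ay iy] [Az iz]; split; first exact: A_join.
by apply: (idem_join Hr) => //; apply: A_comm.
Qed.

Lemma A_R x : A x -> R x.
Proof. apply: vee_ind => [z /Gen_R []|] //; exact: Rjoin. Qed.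

Lemma A_ne : exists a, A a.
Proof.
have [_ [_ [_ [_ [_ [_ H]]]]]] := H5 g.
have [f [[e [s [He _]]] _]] := H 0 (ps0 _ _ _).
exists e; apply: vee_gen; exists g; split => //; exact: c1.
Qed.

Lemma exists_max a : A a -> exists m, maximal_in mul A m /\ idle mul a m.
Proof.
move=> Aa; apply: NNPP => Hno.
have step : forall b, A b -> idle mul a b -> exists c, A c /\ idle mul b c /\ c <> b.
  move=> b Ab hab; apply: NNPP => Hn; apply: Hno; exists b; split => //; split => // f Af hbf.
  apply: NNPP => hne; apply: Hn; exists f; by split.
pose P b c := A c /\ idle mul b c /\ c <> b.
pose nx b := epsilon (inhabits (0 : S)) (P b).
pose s n := iter n nx a.
have Hs : forall n, A (s n) /\ idle mul a (s n) /\ idle mul (s n) (s n.+1) /\ s n.+1 <> s n.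
  elim => [|n [An [hn _]]].
    have [A1 [h1 h2]] := epsilon_spec (inhabits (0 : S)) (P a) (step _ Aa (idle_refl (A_idem Aa))).
    by split => //; split; [apply: idle_refl; apply: A_idem|].
  have [An1 [h1 h2]] := epsilon_spec (inhabits (0 : S)) (P (s n)) (step _ An hn).
  have hn1 : idle mul a (s n.+1) := idle_trans Hr hn h1.
  have [A2 [h3 h4]] := epsilon_spec (inhabits (0 : S)) (P (s n.+1)) (step _ An1 hn1).
  by split.
have Hle : forall i k, idle mul (s i) (s (i + k)%N).
  move=> i; elim => [|k IH]; first by rewrite addn0; apply: idle_refl; apply: A_idem; case: (Hs i).
  rewrite addnS; apply: (idle_trans Hr IH); by case: (Hs (i + k)%N) => _ [_ [? _]].
have Hinj : forall i j, (i < j)%N -> s i <> s j.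
  move=> i j lt E; have h1 := Hle i.+1 (j - i.+1)%N; rewrite subnKC // -E in h1.
  have [_ [_ [h2 h3]]] := Hs i; apply: h3; exact: (idle_antisym h1 h2).
pose Ch x := exists n, x = s n.
have chain : is_chain mul A Ch.
  split; first by move=> x [n ->]; case: (Hs n).
  move=> x y [i ->] [j ->]; case: (leqP i j) => hij.
    by left; rewrite -(subnKC hij); apply: Hle.
  by right; rewrite -(subnKC (ltnW hij)); apply: Hle.
have [l Hl] := Hc chain.
have sub : {subset [seq s i | i <- iota 0 (size l).+1] <= l}.
  move=> x /mapP [i _ ->]; apply: In_mem; apply: Hl; by exists i.
have uq : uniq [seq s i | i <- iota 0 (size l).+1].
  rewrite map_inj_in_uniq ?iota_uniq // => i j _ _ E; apply/eqP.
  case: ltngtP => // lt; [by case: (Hinj _ _ lt) | by case: (Hinj _ _ lt)].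
by have := uniq_leq_size uq sub; rewrite size_map size_iota ltnn.
Qed.

Local Notation L x := (exists a, A a /\ mul a x = x).
Local Notation Rt x := (exists a, A a /\ mul x a = x).

Lemma L0 : L 0.
Proof. have [a Aa] := A_ne; exists a; split => //; exact: m0r. Qed.
Lemma LD x y : L x -> L y -> L (x + y).
Proof.
move=> [a [Aa ha]] [b [Ab hb]]; exists (ijoin mul a b); split; first exact: A_join.
rewrite (mDr Hr) (@lu1 _ _ Hr _ b _ ha) ?(@lu2 _ _ Hr a _ _ hb) //; exact: A_comm.
Qed.
Lemma Rt0 : Rt 0.
Proof. have [a Aa] := A_ne; exists a; split => //; exact: m0l. Qed.
Lemma RtD x y : Rt x -> Rt y -> Rt (x + y).
Proof.
move=> [a [Aa ha]] [b [Ab hb]]; exists (ijoin mul a b); split; first exact: A_join.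
rewrite (mDl Hr) (@ru1 _ _ Hr _ b _ ha) ?(@ru2 _ _ Hr a _ _ hb) //; exact: A_comm.
Qed.

Lemma veeM_A h f : coset N g h -> vee mul (M h) f -> A f.
Proof. move=> ch; apply: (vee_mono Hr) => e He; by exists h. Qed.

Lemma L_IC x : IC g x -> L x.
Proof.
move=> [l [Hl ->]]; apply: sum_closed L0 LD _ => p /Hl [ch Hp].
have [l' [Hl' ->]] := (H4 p.1 p.2).2 Hp.
apply: sum_closed L0 LD _ => q /Hl' [q1 q2].
have [_ [_ [_ [_ [_ [_ H]]]]]] := H5 p.1.
have [f [vf [hf _]]] := H _ q1.
exists f; split; first exact: veeM_A ch vf.
by rewrite (mA Hr) hf.
Qed.

Lemma Rt_IC y : IC (ginv g) y -> Rt y.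
Proof.
move=> [l [Hl ->]]; apply: sum_closed Rt0 RtD _ => p /Hl [ck Hp].
have [l' [Hl' ->]] := (H4 p.1 p.2).2 Hp.
apply: sum_closed Rt0 RtD _ => q /Hl' [[l2 [Hl2 ->]] q2].
rewrite (msuml Hr); apply: sum_closed Rt0 RtD _ => u /Hl2 [u1 u2].
have [_ [_ [_ [_ [_ [_ H]]]]]] := H5 (ginv p.1).
have hq : prodset mul (Sg (ginv p.1)) (Sg (ginv (ginv p.1))) (mul u.2 q.2).
  by apply: ps1; rewrite ?ginvK.
have [f [vf [_ hf]]] := H _ hq.
exists f; split; first exact: veeM_A (c3 HN ck) vf.
by rewrite -(mA Hr u.1 u.2 q.2) -(mA Hr u.1) hf.
Qed.

Lemma units r : R r -> exists a, A a /\ mul a r = r /\ mul r a = r.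
Proof.
have P0 : exists a, A a /\ mul a 0 = 0 /\ mul 0 a = 0.
  have [a Aa] := A_ne; exists a; split => //; split; [exact: m0r | exact: m0l].
move=> [l [Hl ->]]; apply: (sum_closed (P := fun r => exists a, A a /\ mul a r = r /\ mul r a = r) P0).
  move=> x y [a [Aa [h1 h2]]] [b [Ab [h3 h4]]]; exists (ijoin mul a b).
  have cab := A_comm Aa Ab.
  split; first exact: A_join.
  by rewrite (mDr Hr) (mDl Hr) (@lu1 _ _ Hr _ b _ h1) ?(@lu2 _ _ Hr a _ _ h3) ?(@ru1 _ _ Hr _ b _ h2) ?(@ru2 _ _ Hr a _ _ h4).
move=> p /Hl [/L_IC [a [Aa ha]] /Rt_IC [b [Ab hb]]].
exists (ijoin mul a b); split; first exact: A_join.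
split.
  by rewrite (mA Hr) (@lu1 _ _ Hr _ b _ ha) // (A_comm Aa Ab).
by rewrite -(mA Hr) (ru2 Hr hb) // (A_comm Aa Ab).
Qed.

Lemma main : veps_component mul (IC g) (IC (ginv g)).
Proof.
split.
  move=> x; split.
    move=> [l [Hl ->]]; apply: sum_closed (IC0 _) (@ICD _) _ => p /Hl [[l' [Hl' ->]] h2].
    rewrite (msuml Hr); apply: sum_closed (IC0 _) (@ICD _) _ => q /Hl' [q1 q2].
    exact: ICtriple.
  move=> [l [Hl ->]]; apply: sum_closed (ps0 _ _ _) (@psD _ _ _ _) _ => p /Hl [ch Hp].
  have := (H4 p.1 p.2).2 Hp; apply: psmono => [a|b Hb]; last exact: ICsg ch Hb.
  apply: psmono => [u Hu|v Hv]; [exact: ICsg ch Hu | exact: ICsg (c2 HN ch) Hv].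
exists (maximal_in mul A); split.
  move=> e He; split; [exact: A_R He.1 | exact: Hb1 He].
split; first by move=> e f [Ae _] [Af _]; exact: A_comm.
split; first by move=> e f He Hf Hne; exact: Hb2 He Hf Hne.
have VA : forall x, vee mul (maximal_in mul A) x -> A x.
  apply: vee_ind => [x []|] //; exact: A_join.
split; first by move=> e /VA Ae; split; [exact: A_R | exact: A_idem].
split; first by move=> e f /VA Ae /VA Af; exact: A_comm.
split; first by move=> e f; exact: (vee_join Hr).
move=> r /units [a [Aa [h1 h2]]].
have [m [Mm [hm1 hm2]]] := exists_max Aa.
exists m; split; first exact: vee_gen.
split; first by rewrite -h1 (mA Hr) -hm2.
by rewrite -h2 -(mA Hr) -hm1.
Qed.
End Main.
Theorem proposition5p13 (G : Grp) (N : G -> Prop) (S : zmodType)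
    (mul : S -> S -> S) (Sg : G -> S -> Prop) (M : G -> S -> Prop) :
  is_rng mul ->
  normal_subgroup N ->
  is_grading mul Sg ->
  (* S is virtually epsilon-strongly graded, witnessed by the sets M_g *)
  (forall g, seteq (prodset mul (prodset mul (Sg g) (Sg (ginv g))) (Sg g)) (Sg g)) ->
  (forall g, enough_idem_set mul (prodset mul (Sg g) (Sg (ginv g))) (M g)) ->
  (* (a) *)
  (forall g h k e f, coset N g h -> coset N g k -> M h e -> M k f ->
     mul e f = mul f e) ->
  (* (b) *)
  (forall g e, maximal_in mul (A_C N mul M g) e -> idem mul e) ->
  (forall g e f, maximal_in mul (A_C N mul M g) e ->
     maximal_in mul (A_C N mul M g) f -> e <> f ->
     mul e f = 0 /\ mul f e = 0) ->
  (* (c) *)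
  (forall g Ch, is_chain mul (A_C N mul M g) Ch -> finite_set Ch) ->
  (* conclusion: the induced G/N-grading is virtually epsilon-strong *)
  forall g, veps_component mul (induced_comp N Sg g) (induced_comp N Sg (ginv g)).
Proof.
move=> Hr HN HG H4 H5 Ha Hb1 Hb2 Hc g.
exact: (main Hr HN HG H4 H5 Ha Hb1 Hb2 Hc g).
Qed.
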